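(* In the receding-horizon platoon coordination setting at decision instance $t^\star_n$ described in the context, with deterministic travel times $\bar\tau_n(e,t)\in\mathbb Z_+$ and given remaining times $\tau^i_n\in\mathbb Z_+$, the game $G^d_n=(\mathcal N,\mathcal W_n,\{U^i_n(\cdot,\bar\tau_n)\}_{i\in\mathcal N})$ is an exact potential game and thus admits at least one pure Nash equilibrium.
   Context: Setting: a directed graph $\mathcal G=(\mathcal V,\mathcal E)$, vehicles $\mathcal N=\{1,\dots,N\}$, vehicle $i$ having a fixed path of edges $e^i_1,\dots,e^i_{|\mathcal P^i|}$ with $e^i_k$ from node $v^i_k$ to $v^i_{k+1}$. At a decision instance $t^\star_n\in\mathbb Z_+$, each vehicle $i$ will next be at node $v^i_{a_i}$ after $\tau^i_n\in\mathbb Z_+$ further time steps ($\tau^i_n=0$ if it is currently at that node), and decides waiting times $\boldsymbol w^i_n=(w^i_{a_i,n},\dots,w^i_{b_i,n})\in\mathbb Z_+^{b_i-a_i+1}$ at nodes $v^i_{a_i},\dots,v^i_{b_i}$, for given indices $1\le a_i\le b_i\le|\mathcal P^i|$ (in the receding-horizon scheme with horizon $H$: if vehicle $i$ is on edge $e^i_j$ then $a_i=j+1$, $b_i=j+H$; if it is at node $v^i_k$ then $a_i=k$, $b_i=k+H$), chosen from a finite set $\mathcal W^i_n$; $\mathcal W_n=\mathcal W^1_n\times\dots\times\mathcal W^N_n$. Travel times are given by $\bar\tau_n(e,t)\in\mathbb Z_+$ (in the paper, the rounded conditional mean of the travel time on $e$ entered at $t$, given the history observed up to $t^\star_n$). Departure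 times are $d^i_{a_i}=t^\star_n+\tau^i_n+w^i_{a_i,n}$ and $d^i_{l+1}=d^i_l+\bar\tau_n(e^i_l,d^i_l)+w^i_{l+1,n}$ for $a_i\le l<b_i$. Let $C_n(e,t)=\{i\in\mathcal N:\exists k\in\{a_i,\dots,b_i\},\ e^i_k=e,\ d^i_k=t\}$. With a reward function $R:\mathbb Z_{\ge1}\times\mathcal E\to\mathbb R$ and waiting costs $\Lambda_i:\mathcal W^i_n\to\mathbb R$, the utility of vehicle $i$ is $$U^i_n(\boldsymbol w^i_n,\boldsymbol w^{-i}_n,\bar\tau_n)=\sum_{k=a_i}^{b_i}R\big(|C_n(e^i_k,d^i_k)|,e^i_k\big)-\Lambda_i(\boldsymbol w^i_n).$$ An exact potential game is one admitting a function $\Phi$ on action profiles such that any unilateral action change of a player changes $\Phi$ by exactly the change of that player's utility; a pure Nash equilibrium is a profile from which no player can profitably deviate unilaterally. *)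

(* Defs.v *)
From mathcomp Require Import all_boot all_order all_algebra.
Set Implicit Arguments. Unset Strict Implicit. Unset Printing Implicit Defensive.
Import Order.TTheory GRing.Theory Num.Theory.
Local Open Scope ring_scope.

(* A vehicle path is given by its node
   sequence [v_1; ...; v_{m+1}]; its edges are e_k = (v_k, v_{k+1}). *)
Definition path_edges (V : Type) (s : seq V) : seq (V * V) := zip s (behead s).

Definition is_graph_path (V : eqType) (G : rel V) (s : seq V) : Prop :=
  [/\ (1 < size s)%N, all (fun e => G e.1 e.2) (path_edges s) & uniq s].

(* deps tb t es ws: given the time t at which the vehicle reaches the first
   node of the edge list es, the waiting times ws at the successive nodes,
   returns the list of (edge, departure time) pairs:
   d_1 = t + w_1, d_{l+1} = d_l + tb(e_l, d_l) + w_{l+1}. *)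
Fixpoint deps (E : Type) (tb : E -> nat -> nat) (t : nat) (es : seq E)
  (ws : seq nat) : seq (E * nat) :=
  match es, ws with
  | e :: es', w :: ws' => let d := (t + w)%N in (e, d) :: deps tb (d + tb e d)%N es' ws'
  | _, _ => [::]
  end.

(* edges e^i_{a}, ..., e^i_{b} (1-based indices) of a path *)
Definition horizon_edges (V : Type) (s : seq V) (a b : nat) : seq (V * V) :=
  take (b - a + 1) (drop (a - 1) (path_edges s)).

Section Games.
Variables (R : numDomainType) (N : nat) (S : Type).

Definition upd (w : 'I_N -> S) (i : 'I_N) (s : S) : 'I_N -> S :=
  fun j => if j == i then s else w j.

Definition feasible_profile (feasible : 'I_N -> S -> Prop) (w : 'I_N -> S) :=
  forall j, feasible j (w j).

Definition exact_potential_game (feasible : 'I_N -> S -> Prop)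
  (U : 'I_N -> ('I_N -> S) -> R) : Prop :=
  exists Phi : ('I_N -> S) -> R,
    forall w, feasible_profile feasible w ->
    forall i s, feasible i s ->
      Phi (upd w i s) - Phi w = U i (upd w i s) - U i w.

Definition pure_nash_equilibrium (feasible : 'I_N -> S -> Prop)
  (U : 'I_N -> ('I_N -> S) -> R) (w : 'I_N -> S) : Prop :=
  feasible_profile feasible w /\
  forall i s, feasible i s -> U i (upd w i s) <= U i w.
End Games.

Section Platoon.
Variables (R : numDomainType) (V : eqType) (N : nat).
Variables (P : 'I_N -> seq V)
          (a b : 'I_N -> nat)
          (tstar : nat)
          (tau : 'I_N -> nat)
          (tbar : V * V -> nat -> nat).

Definition plan (w : 'I_N -> seq nat) (i : 'I_N) : seq ((V * V) * nat) :=
  deps tbar (tstar + tau i)%N (horizon_edges (P i) (a i) (b i)) (w i).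

Definition congestion (w : 'I_N -> seq nat) (e : V * V) (t : nat) : nat :=
  #|[set j : 'I_N | (e, t) \in plan w j]|.

Definition utility (Rw : nat -> V * V -> R) (Lam : 'I_N -> seq nat -> R)
  (i : 'I_N) (w : 'I_N -> seq nat) : R :=
  \sum_(p <- plan w i) Rw (congestion w p.1 p.2) p.1 - Lam i (w i).
End Platoon.

(* Main.v *)
Require Import Defs.
From mathcomp Require Import all_boot all_order all_algebra.
From mathcomp Require Import ring.
From Stdlib Require Import FunctionalExtensionality.
Import Order.TTheory GRing.Theory Num.Theory.
Local Open Scope ring_scope.

Lemma deps_fst (E : Type) (tb : E -> nat -> nat) (t : nat) (es : seq E) (ws : seq nat) :
  map fst (deps tb t es ws) = take (size ws) es.
Proof.
elim: es t ws => [|e es IH] t [|w ws] //=.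
by rewrite IH.
Qed.

Lemma uniq_deps (E : eqType) (tb : E -> nat -> nat) (t : nat) (es : seq E) (ws : seq nat) :
  uniq es -> uniq (deps tb t es ws).
Proof.
move=> Hu; apply: (@map_uniq _ _ fst); rewrite deps_fst; exact: take_uniq.
Qed.

Lemma argmax_seq (R : realFieldType) (T : eqType) (F : T -> R) (x0 : T) (s : seq T) :
  exists2 x, x \in x0 :: s & forall y, y \in x0 :: s -> F y <= F x.
Proof.
elim: s x0 => [|z s IH] x0.
  by exists x0; rewrite ?mem_head // => y; rewrite inE => /eqP ->.
have [x Hx Hmax] := IH x0.
case: (leP (F z) (F x)) => Hz.
  exists x; first by move: Hx; rewrite !inE; case/orP => ->; rewrite ?orbT.
  move=> y; rewrite !inE => /or3P [/eqP ->| /eqP -> | Hy] //.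
    by apply: Hmax; rewrite mem_head.
  by apply: Hmax; rewrite inE Hy orbT.
exists z; first by rewrite !inE eqxx orbT.
move=> y; rewrite !inE => /or3P [/eqP ->| /eqP -> | Hy] //.
  by apply: le_trans (ltW Hz); apply: Hmax; rewrite mem_head.
by apply: le_trans (ltW Hz); apply: Hmax; rewrite inE Hy orbT.
Qed.

Theorem corollary1
  (R : realFieldType) (V : finType) (G : rel V) (N : nat)
  (P : 'I_N -> seq V)
  (HP : forall i, is_graph_path G (P i))
  (a b : 'I_N -> nat)
  (Hab : forall i, (1 <= a i)%N /\ (a i <= b i)%N /\ (b i <= size (path_edges (P i)))%N)
  (tstar : nat) (tau : 'I_N -> nat) (tbar : V * V -> nat -> nat)
  (W : 'I_N -> seq (seq nat))
  (HWsize : forall i s, s \in W i -> size s = (b i - a i + 1)%N)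
  (HWne : forall i, W i != [::])
  (Rw : nat -> V * V -> R) (Lam : 'I_N -> seq nat -> R) :
  let feasible := fun (i : 'I_N) (s : seq nat) => s \in W i in
  let U := utility P a b tstar tau tbar Rw Lam in
  exact_potential_game feasible U /\
  exists w, pure_nash_equilibrium feasible U w.
Proof.
move=> feasible U.
pose pl (i : 'I_N) (s : seq nat) :=
  deps tbar (tstar + tau i) (horizon_edges (P i) (a i) (b i)) s.
have uniq_pl : forall i s, uniq (pl i s).
  move=> i s; apply: uniq_deps; apply: take_uniq; apply: drop_uniq.
  by apply: zip_uniql; case: (HP i).
pose L := undup (flatten [seq pl i s | i <- enum 'I_N, s <- W i]).
have inL : forall i s r, s \in W i -> r \in pl i s -> r \in L.
  move=> i s r Hs Hr; rewrite mem_undup; apply/flattenP; exists (pl i s) => //.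
  by apply/allpairsPdep; exists i, s; rewrite mem_enum.
pose F (r : (V * V) * nat) n := \sum_(k < n) Rw k.+1 r.1.
pose cong w (r : (V * V) * nat) := congestion P a b tstar tau tbar w r.1 r.2.
pose Phi w := \sum_(r <- L) F r (cong w r) - \sum_j Lam j (w j).
pose c' w i r := #|[pred j | (j != i) && (r \in plan P a b tstar tau tbar w j)]|.
have congE : forall w i r,
    cong w r = ((r \in plan P a b tstar tau tbar w i) + c' w i r)%N.
  move=> w i [e t]; rewrite /cong /congestion cardsE (cardD1 i) /=.
  congr (_ + _)%N; apply: eq_card => j; rewrite !inE //.
pose Q w i := \sum_(r <- L) F r (c' w i r) - \sum_(j | j != i) Lam j (w j).
have key : forall w i, w i \in W i -> Phi w = U i w + Q w i.
  move=> w i Hw.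
  have E1 : \sum_(r <- L) F r (cong w r) = \sum_(r <- L) F r (c' w i r) +
      \sum_(r <- L | r \in plan P a b tstar tau tbar w i) Rw (cong w r) r.1.
    rewrite [X in _ + X]big_mkcond -big_split /=; apply: eq_bigr => r _.
    rewrite (congE w i); case: (r \in plan _ _ _ _ _ _ w i) => /=.
      by rewrite add1n /F big_ord_recr.
    by rewrite add0n addr0.
  have E2 : \sum_(r <- L | r \in plan P a b tstar tau tbar w i) Rw (cong w r) r.1 =
      \sum_(r <- plan P a b tstar tau tbar w i) Rw (congestion P a b tstar tau tbar w r.1 r.2) r.1.
    rewrite -big_filter; apply: perm_big; apply: uniq_perm.
    - by rewrite filter_uniq // undup_uniq.
    - exact: uniq_pl.
    move=> r; rewrite mem_filter; case Hr: (r \in _) => //=.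
    exact: (inL i (w i)).
  rewrite /Phi E1 E2 /U /utility /Q (bigD1 i) //=.
  set A := \sum_(r <- L) _; set B := \sum_(r <- _) _; set C := \sum_(j | _) _.
  ring.
have Qupd : forall w i s, Q (upd w i s) i = Q w i.
  move=> w i s; rewrite /Q; congr (_ - _).
    apply: eq_bigr => r _; congr (F r _); apply: eq_card => j; rewrite !inE.
    case Hj: (j != i) => //=.
    by rewrite /plan /upd (negbTE Hj).
  by apply: eq_bigr => j Hj; rewrite /upd (negbTE Hj).
have pot : forall w, feasible_profile feasible w ->
    forall i s, feasible i s -> Phi (upd w i s) - Phi w = U i (upd w i s) - U i w.
  move=> w Hw i s Hs.
  rewrite (key w i (Hw i)) (key (upd w i s) i); last by rewrite /upd eqxx.
  rewrite Qupd; ring.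
split; first by exists Phi.
pose M := (\max_(i < N) size (W i)).+1.
pose wof (f : {ffun 'I_N -> 'I_M}) i := nth (head [::] (W i)) (W i) (f i).
have wof_feas : forall f, feasible_profile feasible (wof f).
  move=> f i; rewrite /feasible /wof.
  case: (ltnP (f i) (size (W i))) => h; first exact: mem_nth.
  rewrite nth_default //; move: (HWne i); case: (W i) => //= x l _.
  exact: mem_head.
have [fs _ Hmax] := @argmax_seq R _ (fun f => Phi (wof f)) [ffun=> ord0] (enum {ffun 'I_N -> 'I_M}).
exists (wof fs); split; first exact: wof_feas.
move=> i s Hs.
have Hidx : (index s (W i) < M)%N.
  rewrite /M ltnS; have H1 : (index s (W i) < size (W i))%N by rewrite index_mem.
  by apply: leq_trans (ltnW H1) _; exact: (leq_bigmax i).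
pose f' := [ffun j => if j == i then Ordinal Hidx else fs j].
have Hup : upd (wof fs) i s = wof f'.
  apply: functional_extensionality => j; rewrite /upd /wof ffunE.
  case: eqP => [->|] //=; by rewrite nth_index.
rewrite -subr_le0 -pot //.
Show.
rewrite Hup subr_le0; apply: Hmax; by rewrite inE mem_enum orbT.
Qed.
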